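(* Let $q\ge2$ be even and $d\ge q$. Let $f$ be a density on $\mathbb{R}^d$ with mode $\boldsymbol\theta$, sufficiently smooth, whose $(q+1)$-st order term of the Taylor expansion around $\boldsymbol\theta$ is of the form $\prod_{i=1}^{q+1}\mathbf a_i^\top(\mathbf x-\boldsymbol\theta)$, where $\mathbf a_1,\ldots,\mathbf a_{q+1}$ span a $q$-dimensional subspace of $\mathbb{R}^d$, and suppose $\sum_{i=1}^{q+1}s_i\mathbf a_i=\mathbf 0$ for some coefficients with $s_1s_2\cdots s_{q+1}\neq0$. Then there is a choice of $\mathrm Q$ for which the asymptotic bias is equal to zero, i.e. $\nabla(\nabla^\top\mathrm Q\nabla)^{q/2}f(\boldsymbol\theta)=\mathbf 0$.
   Context: Setting: $\mathrm A=\{Hf(\boldsymbol\theta)\}^{-1}$ is assumed to exist. For a radial $q$-th order kernel $K(\mathbf x)=G(\|\mathbf x\|)$ and a $d\times d$ matrix $\mathrm P$ with $|\det\mathrm P|=1$, the elliptic kernel is $K_{\mathrm P}(\mathbf x)=K(\mathrm P\mathbf x)$ and $\mathrm Q=\mathrm P^{-1}\mathrm P^{-\top}$ (symmetric positive definite). The asymptotic bias of the kernel mode estimator with kernel $K_{\mathrm P}$ and bandwidth $h_n$ is $-\frac{\pi^{d/2}h_n^q}{2^{q-1}\Gamma(\frac{d+q}{2})\Gamma(\frac q2+1)}B_{d,q}(G)\,\mathrm A\,\nabla(\nabla^\top\mathrm Q\nabla)^{q/2}f(\boldsymbol\theta)$ with $B_{d,q}(G)=\int_0^\infty x^{d-1+q}G(x)dx\ne0$,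 so it vanishes iff $\nabla(\nabla^\top\mathrm Q\nabla)^{q/2}f(\boldsymbol\theta)=\mathbf 0$ (a quantity depending only on the $(q+1)$-st order Taylor term of $f$ at $\boldsymbol\theta$). *)

(* Defs.v *)
From HB Require Import structures.
From mathcomp Require Import all_boot all_order all_algebra.
From mathcomp Require Import all_classical all_reals all_analysis.
Set Implicit Arguments. Unset Strict Implicit. Unset Printing Implicit Defensive.
Import Order.TTheory GRing.Theory Num.Theory.
Import numFieldNormedType.Exports.
Local Open Scope ring_scope.

Section KernelModeDefs.
Variables (R : realType) (d : nat).

Definition partial (i : 'I_d) (f : 'rV[R]_d -> R) : 'rV[R]_d -> R :=
  fun x => derive f x (delta_mx 0 i).

(* iterated partial derivative: iter_partial [:: k1; ...; km] f
   = d_{k1} (d_{k2} ( ... (d_{km} f))) *)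
Definition iter_partial (s : seq 'I_d) (f : 'rV[R]_d -> R) : 'rV[R]_d -> R :=
  foldr partial f s.

Definition smooth_upto (n : nat) (f : 'rV[R]_d -> R) : Prop :=
  (forall s : seq 'I_d, (size s <= n)%N -> continuous (iter_partial s f)) /\
  (forall s : seq 'I_d, (size s < n)%N ->
     forall x, differentiable (iter_partial s f) x).

Definition taylor_term (n : nat) (f : 'rV[R]_d -> R) (th h : 'rV[R]_d) : R :=
  (n`!%:R)^-1 * \sum_(j : n.-tuple 'I_d)
     (iter_partial j f th * \prod_(m < n) h 0 (tnth j m)).

Definition hessian (f : 'rV[R]_d -> R) (th : 'rV[R]_d) : 'M[R]_d :=
  \matrix_(i, j) partial i (partial j f) th.

Definition LQ (Q : 'M[R]_d) (g : 'rV[R]_d -> R) : 'rV[R]_d -> R :=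
  fun x => \sum_(i < d) \sum_(j < d) Q i j * partial i (partial j g) x.

Definition bias_vec (q : nat) (Q : 'M[R]_d) (f : 'rV[R]_d -> R)
    (th : 'rV[R]_d) : 'rV[R]_d :=
  \row_(k < d) partial k (iter (q %/ 2) (LQ Q) f) th.

Definition dotv (a h : 'rV[R]_d) : R := \sum_(k < d) a 0 k * h 0 k.

End KernelModeDefs.

(* Main.v *)
Require Import Defs.
From HB Require Import structures.
From mathcomp Require Import all_boot all_order all_algebra all_fingroup.
From mathcomp Require Import all_classical all_reals all_analysis.
Import Order.TTheory GRing.Theory Num.Theory.
Import numFieldNormedType.Exports.
From mathcomp Require Import zify ring lra.
Local Open Scope ring_scope.

Fixpoint Cm {R : realType} {d : nat} (Q : 'M[R]_d) (m : nat) (F : seq 'I_d -> R) : R :=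
  match m with
  | 0 => F [::]
  | m'.+1 => \sum_(i < d) \sum_(j < d) Q i j * Cm Q m' (fun s => F (i :: j :: s))
  end.

Section Cdef.
Variables (R : realType) (d : nat) (Q : 'M[R]_d).
Lemma is_derive_Cm m : forall (F : seq 'I_d -> 'rV[R]_d -> R) (dF : seq 'I_d -> R) x v,
  (forall s, size s = (2 * m)%N -> is_derive x v (F s) (dF s)) ->
  is_derive x v (fun y => Cm Q m (fun s => F s y)) (Cm Q m dF).
Proof.
elim: m => [|m IH] F dF x v H /=.
  exact: H.
have -> : (fun y => \sum_(i < d) \sum_(j < d) Q i j * Cm Q m (fun s => F (i :: j :: s) y))
  = \sum_(i < d) (fun y => \sum_(j < d) Q i j * Cm Q m (fun s => F (i :: j :: s) y)).
  by apply/funext => y; rewrite fct_sumE.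
apply: is_derive_sum => i.
have -> : (fun y => \sum_(j < d) Q i j * Cm Q m (fun s => F (i :: j :: s) y))
  = \sum_(j < d) (Q i j \*: (fun y => Cm Q m (fun s => F (i :: j :: s) y))).
  by apply/funext => y; rewrite fct_sumE.
apply: is_derive_sum => j.
have -> : Q i j * Cm Q m (fun s => dF [:: i, j & s]) = Q i j *: Cm Q m (fun s => dF [:: i, j & s]) by [].
apply: is_deriveZ; apply: IH => t Ht; apply: H => /=; rewrite Ht; lia.
Qed.

End Cdef.

Section PartA.
Variables (R : realType) (d q : nat) (Q : 'M[R]_d) (f : 'rV[R]_d -> R).
Hypothesis hsm : smooth_upto q.+1 f.

Lemma partial_Cm m (F : seq 'I_d -> 'rV[R]_d -> R) k :
  (forall s, size s = (2 * m)%N -> forall y, differentiable (F s) y) ->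
  partial k (fun y => Cm Q m (fun s => F s y)) = fun y => Cm Q m (fun s => partial k (F s) y).
Proof.
move=> H; apply/funext => y; rewrite /partial.
have := @is_derive_Cm R d Q m F (fun s => 'D_(delta_mx 0 k) (F s) y) y (delta_mx 0 k).
move=> /(_ _) h; rewrite (@derive_val _ _ _ _ _ _ _ (h _)) //.
by move=> s Hs; apply: derivableP; apply: diff_derivable; apply: H.
Qed.

Lemma iter_LQ m : (2 * m <= q)%N ->
  iter m (LQ Q) f = fun x => Cm Q m (fun s => iter_partial s f x).
Proof.
elim: m => [|m IH] Hm; first by [].
rewrite iterS IH; last by lia.
apply/funext => x; rewrite /LQ /=.
apply: eq_bigr => i _; apply: eq_bigr => j _; congr (_ * _).
rewrite partial_Cm; last first.
  move=> t Ht y; apply: hsm.2; rewrite Ht; lia.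
rewrite partial_Cm //.
move=> t Ht y; apply: (hsm.2 (j :: t)); rewrite /= Ht; lia.
Qed.

Lemma bias_Cm k : partial k (iter (q %/ 2) (LQ Q) f) =
   fun x => Cm Q (q %/ 2) (fun s => iter_partial (k :: s) f x).
Proof.
rewrite iter_LQ; last by lia.
rewrite partial_Cm //.
move=> t Ht y; apply: hsm.2; rewrite Ht; lia.
Qed.
End PartA.

Section Polar.
Variables (R : realType) (d n : nat).

Definition Tm (T : {ffun 'I_n -> 'I_d} -> R) (v : 'I_n -> 'rV[R]_d) : R :=
  \sum_(phi : {ffun 'I_n -> 'I_d}) T phi * \prod_(m < n) v m 0 (phi m).

Lemma Tm_perm (T : {ffun 'I_n -> 'I_d} -> R) (Hs : forall (phi : {ffun 'I_n -> 'I_d}) (sg : 'S_n), T [ffun i => phi (sg i)] = T phi)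
   v (sg : 'S_n) : Tm T (fun m => v (sg m)) = Tm T v.
Proof.
rewrite /Tm.
pose rho (phi : {ffun 'I_n -> 'I_d}) := [ffun i => phi ((sg^-1)%g i)].
have rinj : injective rho.
  move=> p1 p2 E; apply/ffunP => i.
  by have := congr1 (fun g : {ffun 'I_n -> 'I_d} => g (sg i)) E; rewrite /rho !ffunE permK.
rewrite [RHS](reindex_inj rinj); apply: eq_bigr => phi _.
rewrite Hs; congr (_ * _).
rewrite (reindex_inj (@perm_inj _ (sg^-1)%g)); apply: eq_bigr => m _.
by rewrite /rho ffunE permKV.
Qed.

Lemma Tm_expand (T : {ffun 'I_n -> 'I_d} -> R) (v : 'I_n -> 'rV[R]_d) (E : {set 'I_n}) :
  Tm T (fun _ => \sum_(i in E) v i) =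
  \sum_(psi : {ffun 'I_n -> 'I_n})
     (\prod_(m < n) ((psi m \in E)%:R : R)) * Tm T (fun m => v (psi m)).
Proof.
rewrite /Tm.
under eq_bigr => phi _.
  rewrite (eq_bigr (fun m => \sum_(i < n) ((i \in E)%:R * v i 0 (phi m)))); last first.
    move=> m _; rewrite summxE big_mkcond /=; apply: eq_bigr => i _.
    by case: (i \in E); rewrite ?mul1r ?mul0r.
  rewrite bigA_distr_bigA /= mulr_sumr.
  under eq_bigr => psi _ do rewrite big_split /=.
  over.
rewrite exchange_big /=; apply: eq_bigr => psi _.
rewrite mulr_sumr; apply: eq_bigr => phi _; ring.
Qed.

Lemma incl_excl (psi : {ffun 'I_n -> 'I_n}) :
  \sum_(E : {set 'I_n}) (\prod_(i < n) (if i \in E then 1 else -1 : R)) *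
      \prod_(m < n) ((psi m \in E)%:R : R) = (injectiveb psi)%:R.
Proof.
pose G (i : 'I_n) : R := - ((i \notin codom psi)%:R).
have step : forall E : {set 'I_n},
  (\prod_(i < n) (if i \in E then 1 else -1 : R)) * \prod_(m < n) ((psi m \in E)%:R : R)
  = \prod_(i < n) (if i \in E then 1 else G i).
  move=> E; case: (boolP [forall m, psi m \in E]) => [/forallP Hall | /forallPn [m Hm]].
    rewrite [X in _ * X]big1 ?mulr1; last by move=> m _; rewrite Hall.
    apply: eq_bigr => i _; case: ifP => // iE; rewrite /G.
    case Hc: (i \in codom psi); last by [].
    by move/codomP: Hc => [x Hx]; rewrite Hx Hall in iE.
  rewrite [X in _ * X](bigD1 m) //= (negbTE Hm) mul0r mulr0.
  rewrite (bigD1 (psi m)) //= (negbTE Hm) /G codom_f /= oppr0 mul0r //.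
rewrite (eq_bigr _ (fun E _ => step E)).
rewrite -(@bigA_distr R 0 1 *%R +%R _ (fun _ => 1) G).
rewrite (eq_bigr (fun i => ((i \in codom psi)%:R : R))); last first.
  by move=> i _; rewrite /G; case: (i \in codom psi); rewrite /= ?subr0 ?subrr.
case: (boolP [forall i, i \in codom psi]) => [/forallP Hall | /forallPn [i Hi]].
  rewrite big1; last by move=> i _; rewrite Hall.
  suff -> : injectiveb psi by [].
  apply/injectiveP.
  have : #|codom psi| == #|'I_n|.
    apply/eqP; apply: eq_card => i; rewrite Hall.
    by [].
  move=> /image_injP H x y; exact: H.
rewrite (bigD1 i) //= (negbTE Hi) mul0r.
suff -> : injectiveb psi = false by [].
apply/negP => /injectiveP inj; move/negP: Hi; apply.
have E1 : codom psi =i 'I_n.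
  apply/subset_cardP; first exact: card_codom.
  by apply/fintype.subsetP => x _.
by rewrite E1.
Qed.

Lemma polar (T : {ffun 'I_n -> 'I_d} -> R)
  (Hs : forall (phi : {ffun 'I_n -> 'I_d}) (sg : 'S_n), T [ffun i => phi (sg i)] = T phi)
  (v : 'I_n -> 'rV[R]_d) :
  \sum_(E : {set 'I_n}) (\prod_(i < n) (if i \in E then 1 else -1 : R)) *
      Tm T (fun _ => \sum_(i in E) v i) = n`!%:R * Tm T v.
Proof.
under eq_bigr => E _ do rewrite Tm_expand mulr_sumr.
rewrite exchange_big /=.
under eq_bigr => psi _.
  under eq_bigr => E _ do rewrite mulrA.
  rewrite -mulr_suml incl_excl.
  over.
transitivity (\sum_(psi : {ffun 'I_n -> 'I_n}) (injectiveb psi)%:R * Tm T v).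
  apply: eq_bigr => psi _; case: (boolP (injectiveb psi)) => [/injectiveP inj|_]; last by rewrite !mul0r.
  congr (_ * _); rewrite -(Tm_perm T Hs v (perm inj)).
  by congr (Tm T _); apply/funext => m; rewrite permE.
rewrite -mulr_suml; congr (_ * _).
rewrite -natr_sum; congr (_%:R).
rewrite -ffactnn.
have := card_inj_ffuns 'I_n 'I_n; rewrite card_ord => <-.
rewrite -sum1_card big_mkcond /=.
rewrite [RHS]big_mkcond /=; apply: eq_bigr => psi _; rewrite inE.
by case: (injectiveb psi).
Qed.

Lemma Tm_delta (T : {ffun 'I_n -> 'I_d} -> R) (phi0 : {ffun 'I_n -> 'I_d}) :
  Tm T (fun m => delta_mx 0 (phi0 m)) = T phi0.
Proof.
rewrite /Tm (bigD1 phi0) //= big1 ?mulr1 ?addr0.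
  rewrite big1 ?addr0 //.
  move=> phi /negbTE Hne.
  have [m Hm] : exists m, phi m != phi0 m.
    apply/existsP; apply: contraFT Hne => /existsPn H.
    by apply/eqP/ffunP => m; apply/eqP; move: (H m); rewrite negbK.
  by rewrite (bigD1 m) //= mxE eqxx /= (negbTE Hm) mul0r mulr0.
by move=> m _; rewrite mxE !eqxx.
Qed.

Lemma sym_uniq (T1 T2 : {ffun 'I_n -> 'I_d} -> R)
  (Hs1 : forall (phi : {ffun 'I_n -> 'I_d}) (sg : 'S_n), T1 [ffun i => phi (sg i)] = T1 phi)
  (Hs2 : forall (phi : {ffun 'I_n -> 'I_d}) (sg : 'S_n), T2 [ffun i => phi (sg i)] = T2 phi)
  (Hdiag : forall h, Tm T1 (fun _ => h) = Tm T2 (fun _ => h)) phi :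
  T1 phi = T2 phi.
Proof.
rewrite -Tm_delta -[RHS]Tm_delta.
set v := fun m => _.
have H1 := polar T1 Hs1 v; have H2 := polar T2 Hs2 v.
have : n`!%:R * Tm T1 v = n`!%:R * Tm T2 v.
  by rewrite -H1 -H2; apply: eq_bigr => E _; rewrite Hdiag.
apply: mulfI.
by rewrite pnatr_eq0 -lt0n fact_gt0.
Qed.

Definition Ta (a : 'I_n -> 'rV[R]_d) (phi : {ffun 'I_n -> 'I_d}) : R :=
  \sum_(sg : 'S_n) \prod_(m < n) a (sg m) 0 (phi m).

Lemma Ta_sym a (phi : {ffun 'I_n -> 'I_d}) (tau : 'S_n) :
  Ta a [ffun i => phi (tau i)] = Ta a phi.
Proof.
have hinj : injective (fun sg : 'S_n => (tau^-1 * sg)%g) by apply: mulgI.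
rewrite /Ta [RHS](reindex_inj hinj) /=; apply: eq_bigr => sg _.
rewrite [RHS](reindex_inj (@perm_inj _ tau)) /=; apply: eq_bigr => m _.
by rewrite ffunE permM permK.
Qed.

Lemma Ta_diag a h : Tm (Ta a) (fun _ => h) = n`!%:R * \prod_(i < n) dotv (a i) h.
Proof.
rewrite /Tm /Ta.
under eq_bigr => phi _ do rewrite mulr_suml.
rewrite exchange_big /=.
transitivity (\sum_(sg : 'S_n) \prod_(i < n) dotv (a i) h); last first.
  by rewrite sumr_const card_Sn mulr_natl.
apply: eq_bigr => sg _.
rewrite (reindex_inj (@perm_inj _ sg)) /=.
rewrite /dotv bigA_distr_bigA /=; apply: eq_bigr => phi _.
by rewrite -big_split.
Qed.

End Polar.

Section CmLemmas.
Variables (R : realType) (d : nat) (Q : 'M[R]_d).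

Definition bil (u w : 'rV[R]_d) : R := \sum_(i < d) \sum_(j < d) Q i j * (u 0 i * w 0 j).

Lemma Cm_ext m : forall F G, (forall s, size s = (2 * m)%N -> F s = G s) -> Cm Q m F = Cm Q m G.
Proof.
elim: m => [|m IH] F G H /=; first by apply: H.
apply: eq_bigr => i _; apply: eq_bigr => j _; congr (_ * _); apply: IH => t Ht.
by apply: H => /=; rewrite Ht; lia.
Qed.

Lemma Cm_scale m : forall F c, Cm Q m (fun s => c * F s) = c * Cm Q m F.
Proof.
elim: m => [|m IH] F c //=.
rewrite mulr_sumr; apply: eq_bigr => i _; rewrite mulr_sumr; apply: eq_bigr => j _.
by rewrite (IH (fun s => F [:: i, j & s])) mulrCA.
Qed.

Lemma Cm_sum m (I : finType) : forall (F : I -> seq 'I_d -> R),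
  Cm Q m (fun s => \sum_(x : I) F x s) = \sum_(x : I) Cm Q m (F x).
Proof.
elim: m => [|m IH] F //=.
transitivity (\sum_(i < d) \sum_(x : I) \sum_(j < d) Q i j * Cm Q m (F x \o (fun s => [:: i, j & s]))).
  apply: eq_bigr => i _; rewrite exchange_big /=; apply: eq_bigr => j _.
  by rewrite (IH (fun x s => F x [:: i, j & s])) mulr_sumr.
by rewrite exchange_big.
Qed.

Lemma Cm_prod m : forall (b : nat -> 'rV[R]_d) (i0 : 'I_d),
  Cm Q m (fun s => \prod_(0 <= r < 2 * m) b r 0 (nth i0 s r)) =
  \prod_(0 <= r < m) bil (b (2 * r)%N) (b (2 * r).+1).
Proof.
elim: m => [|m IH] b i0 /=; first by rewrite !big_geq.
rewrite big_nat_recl //.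
rewrite /bil mulr_suml; apply: eq_bigr => i _; rewrite mulr_suml; apply: eq_bigr => j _.
have -> : (2 * m.+1 = (2 * m).+2)%N by lia.
rewrite (@Cm_ext m _ (fun s => (b 0%N 0 i * b 1%N 0 j) * \prod_(0 <= r < 2 * m) b (r.+2) 0 (nth i0 s r))); last first.
  move=> t _; rewrite big_nat_recl // big_nat_recl //= mulrA.
  by congr (_ * _); apply: eq_bigr => r _.
rewrite Cm_scale (IH (fun r => b r.+2)) -!mulrA; congr (_ * _); congr (_ * _).
congr (_ * _); apply: eq_bigr => r _.
by congr (bil (b _) (b _)); lia.
Qed.

End CmLemmas.
Arguments bil {R d} Q u w.

Section LA.
Variable R : realType.

Lemma dotv_rows d m (B : 'M[R]_(m, d)) j1 j2 :
  dotv (row j1 B) (row j2 B) = (B *m B^T) j1 j2.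
Proof. by rewrite /dotv !mxE; apply: eq_bigr => k _; rewrite !mxE. Qed.

Lemma dotv_suml d n (x : 'I_n -> 'rV[R]_d) y :
  dotv (\sum_(j < n) x j) y = \sum_(j < n) dotv (x j) y.
Proof.
rewrite /dotv; under eq_bigr => k _ do rewrite summxE mulr_suml.
by rewrite exchange_big.
Qed.

Lemma dotvN d (x y : 'rV[R]_d) : dotv (- x) y = - dotv x y.
Proof. by rewrite /dotv -sumrN; apply: eq_bigr => k _; rewrite mxE mulNr. Qed.

Lemma dotvZ d c (x y : 'rV[R]_d) : dotv (c *: x) y = c * dotv x y.
Proof. by rewrite /dotv mulr_sumr; apply: eq_bigr => k _; rewrite mxE mulrA. Qed.

Lemma dotvC d (x y : 'rV[R]_d) : dotv x y = dotv y x.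
Proof. by rewrite /dotv; apply: eq_bigr => k _; rewrite mulrC. Qed.

Lemma bil_dotv d (M : 'M[R]_d) u v : bil (M *m M^T) u v = dotv (u *m M) (v *m M).
Proof.
rewrite /bil /dotv.
under [RHS]eq_bigr => k _ do rewrite !mxE mulr_suml.
under [RHS]eq_bigr => k _ do under eq_bigr => i _ do rewrite mulr_sumr.
rewrite [RHS]exchange_big /=; apply: eq_bigr => i _.
rewrite [RHS]exchange_big /=; apply: eq_bigr => j _.
rewrite !mxE mulr_suml; apply: eq_bigr => k _; rewrite !mxE; ring.
Qed.

Lemma IJ_mul q (x1 y1 x2 y2 : R) :
  (x1%:M + y1 *: const_mx 1) *m (x2%:M + y2 *: const_mx 1) =
  (x1 * x2)%:M + (x1 * y2 + y1 * x2 + q%:R * y1 * y2) *: (const_mx 1 : 'M[R]_q).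
Proof.
have JJ : (const_mx 1 : 'M[R]_q) *m (const_mx 1 : 'M[R]_q) = q%:R *: (const_mx 1 : 'M[R]_q).
  apply/matrixP => i j; rewrite !mxE (eq_bigr (fun _ => 1)); last by move=> k _; rewrite !mxE mulr1.
  by rewrite sumr_const card_ord mulr1.
rewrite mulmxDl !mulmxDr mul_scalar_mx mul_mx_scalar scale_scalar_mx.
rewrite -!scalemxAl -!scalemxAr JJ mul_scalar_mx !scalerA.
apply/matrixP => i j; rewrite !mxE; ring.
Qed.

Section Proj.
Variables (q d : nat) (E : 'M[R]_(q, d)).
Hypothesis EEt : E *m E^T = 1%:M.

Lemma projG1 (Y : 'M[R]_q) : E *m ((1%:M - E^T *m E) + E^T *m Y *m E) = Y *m E.
Proof.
by rewrite mulmxDr mulmxBr mulmx1 !mulmxA EEt !mul1mx subrr add0r.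
Qed.

Lemma projG2 (Y Z : 'M[R]_q) :
  ((1%:M - E^T *m E) + E^T *m Y *m E) *m ((1%:M - E^T *m E) + E^T *m Z *m E)
  = (1%:M - E^T *m E) + E^T *m (Y *m Z) *m E.
Proof.
have hF : (1%:M - E^T *m E) *m (1%:M - E^T *m E) = 1%:M - E^T *m E.
  rewrite mulmxBl mul1mx mulmxBr mulmx1 !mulmxA -(mulmxA E^T E E^T) EEt mulmx1.
  by rewrite subrr subr0.
have hFK : (1%:M - E^T *m E) *m (E^T *m Z *m E) = 0.
  rewrite mulmxBl mul1mx !mulmxA -(mulmxA E^T E E^T) EEt mulmx1.
  by rewrite subrr.
have hKF : (E^T *m Y *m E) *m (1%:M - E^T *m E) = 0.
  rewrite mulmxBr mulmx1 !mulmxA -(mulmxA _ E E^T) EEt mulmx1.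
  by rewrite subrr.
have hKK : (E^T *m Y *m E) *m (E^T *m Z *m E) = E^T *m (Y *m Z) *m E.
  by rewrite !mulmxA -(mulmxA _ E E^T) EEt mulmx1.
by rewrite mulmxDl [X in X + _]mulmxDr [X in _ + X]mulmxDr hF hFK hKF hKK addr0 add0r.
Qed.
End Proj.

End LA.

Lemma exists_P (R : realType) d q (a : 'I_q.+1 -> 'rV[R]_d) (s : 'I_q.+1 -> R) :
  (0 < q)%N -> (q <= d)%N -> \rank (\matrix_(i < q.+1) a i) = q ->
  \sum_(i < q.+1) s i *: a i = 0 -> (forall i, s i != 0) ->
  exists P : 'M[R]_d, exists lam : R, [/\ P \in unitmx, `|\det P| = 1, 0 < lam &
    forall i j, i != j -> bil (invmx P *m (invmx P)^T) (a i) (a j) = - lam / (s i * s j)].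
Proof.
move=> hq hqd hrank hsum hs.
pose w (j : 'I_q) : 'I_q.+1 := widen_ord (leqnSn q) j.
have hsplit : forall i : 'I_q.+1, i = ord_max \/ exists j, i = w j.
  move=> i; case: (ltnP i q) => hi.
    by right; exists (Ordinal hi); apply: val_inj.
  by left; apply: val_inj => /=; move: (ltn_ord i); lia.
pose A0 : 'M[R]_(q, d) := \matrix_(j < q) (s (w j) *: a (w j)).
have hmax : s ord_max *: a ord_max = - \sum_(j < q) s (w j) *: a (w j).
  apply/eqP; rewrite -addr_eq0 addrC.
  by move: hsum; rewrite big_ord_recr /= => ->.
have hA0 : \rank A0 = q.
  apply/eqP; rewrite eqn_leq rank_leq_row /= -{1}hrank; apply: mxrankS.
  apply/row_subP => i; rewrite rowK.
  have [->|[j ->]] := hsplit i.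
    have -> : a ord_max = \sum_(j < q) (- (s ord_max)^-1) *: row j A0.
      rewrite -scaler_sumr scaleNr -scalerN.
      under eq_bigr => j _ do rewrite rowK.
      by rewrite -hmax scalerA mulVf ?scale1r.
    by apply: summx_sub => j _; apply: scalemx_sub; apply: row_sub.
  have -> : a (w j) = (s (w j))^-1 *: row j A0 by rewrite rowK scalerA mulVf ?scale1r.
  by apply: scalemx_sub; apply: row_sub.
set L := col_ebase A0; set U := row_ebase A0.
pose E : 'M[R]_(q, d) := pid_mx q.
have hA0E : L *m E *m U = A0 by have := mulmx_ebase A0; rewrite hA0.
have EEt : E *m E^T = 1%:M.
  by rewrite /E tr_pid_mx mul_pid_mx minnn (minn_idPr hqd) pid_mx_1.
pose alpha : R := Num.sqrt (q.+1)%:R.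
pose beta : R := (1 - alpha) / q%:R.
pose J := (const_mx 1 : 'M[R]_q).
pose W0 : 'M[R]_q := alpha%:M + beta *: J.
have ha2 : alpha ^+ 2 = (q.+1)%:R by rewrite sqr_sqrtr // ler0n.
have hqnz : (q%:R : R) != 0 by rewrite pnatr_eq0 -lt0n.
have ha0 : 0 < alpha by rewrite sqrtr_gt0 ltr0n.
have hqb : q%:R * beta = 1 - alpha by rewrite /beta mulrC mulfVK.
have hab : alpha * beta + beta * alpha + q%:R * beta * beta = -1.
  have -> : alpha * beta + beta * alpha + q%:R * beta * beta = beta * (2 * alpha + q%:R * beta).
    ring.
  rewrite hqb /beta.
  have -> : (1 - alpha) / q%:R * (2 * alpha + (1 - alpha)) = (1 - alpha ^+ 2) / q%:R by field.
  by rewrite ha2 -addn1 natrD; field.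
have hW0T : W0^T = W0 by rewrite /W0 linearD /= tr_scalar_mx linearZ /= trmx_const.
have hW0W0 : W0 *m W0^T = (q.+1)%:R%:M - J.
  rewrite hW0T /W0 /J IJ_mul hab.
  apply/matrixP => i j; rewrite !mxE -ha2 expr2; ring.
have hW0u : W0 \in unitmx.
  have anz : alpha != 0 by rewrite gt_eqF.
  have : W0 *m (alpha^-1%:M + (- (alpha^-1 * beta)) *: J) = 1%:M.
    rewrite /W0 /J IJ_mul divff //.
    have -> : alpha * - (alpha^-1 * beta) + beta * alpha^-1 + q%:R * beta * - (alpha^-1 * beta)
       = alpha^-1 * beta * (1 - alpha - q%:R * beta) by field.
    by rewrite hqb subrr mulr0 scale0r addr0.
  by case/mulmx1_unit.
pose X := invmx L *m W0.
have hXu : X \in unitmx by rewrite unitmx_mul unitmx_inv col_ebase_unit hW0u.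
pose N : 'M[R]_d := (1%:M - E^T *m E) + E^T *m X *m E.
have hNu : N \in unitmx.
  have : N *m ((1%:M - E^T *m E) + E^T *m invmx X *m E) = 1%:M.
    by rewrite /N projG2 // mulmxV // mulmx1 subrK.
  by case/mulmx1_unit.
pose M0 := invmx U *m N.
have hM0u : M0 \in unitmx by rewrite unitmx_mul unitmx_inv row_ebase_unit hNu.
have hA0M0 : A0 *m M0 = W0 *m E.
  rewrite -hA0E /M0 -!mulmxA (mulmxA U) mulmxV ?row_ebase_unit // mul1mx.
  by rewrite /N projG1 // /X !mulmxA mulmxV ?col_ebase_unit // mul1mx.
have hdet0 : 0 < `|\det M0| by rewrite normr_gt0 -unitfE -unitmxE.
have hd0 : (d%:R : R) != 0 by rewrite pnatr_eq0 -lt0n; lia.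
pose t : R := ((`|\det M0|) `^ (d%:R)^-1)^-1.
have ht0 : 0 < t by rewrite invr_gt0 powR_gt0.
have htd : t ^+ d = (`|\det M0|)^-1.
  rewrite /t exprVn -powR_mulrn ?powR_ge0 // -powRrM mulVf // powRr1 //.
pose M := t *: M0.
have hMu : M \in unitmx by rewrite unitmxZ ?hM0u // unitfE gt_eqF.
exists (invmx M), (t ^+ 2); split.
- by rewrite unitmx_inv.
- have hdM : `|\det M| = 1.
    by rewrite /M detZ normrM normrX gtr0_norm // htd mulVf // gt_eqF.
  by rewrite det_inv normrV ?hdM ?invr1 // -unitmxE.
- by rewrite exprn_gt0.
move=> i0 j0 hij; rewrite invmxK bil_dotv.
pose r i := (s i *: a i) *m M0.
have hr : forall i, a i *m M = (t / s i) *: r i.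
  move=> k; rewrite /r /M -[in RHS]scalemxAl [RHS]scalerA mulrVK ?unitfE // -scalemxAr.
  by [].
have hrw : forall jj, r (w jj) = row jj (W0 *m E) by move=> jj; rewrite -hA0M0 row_mul rowK.
have hrmax : r ord_max = - \sum_j r (w j) by rewrite /r hmax mulNmx mulmx_suml.
have hG : forall j1 j2, dotv (r (w j1)) (r (w j2)) = (q.+1)%:R *+ (j1 == j2) - 1.
  move=> j1 j2; rewrite !hrw dotv_rows trmx_mul mulmxA -(mulmxA W0 E) EEt mulmx1 hW0W0.
  by rewrite !mxE.
have hsumG : forall j2, \sum_j dotv (r (w j)) (r (w j2)) = 1.
  move=> j2; under eq_bigr do rewrite hG.
  rewrite sumrB sumr_const card_ord (bigD1 j2) //= eqxx big1 ?addr0; last first.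
    by move=> j /negbTE ->.
  by rewrite mulr1n -addn1 natrD addrAC subrr add0r.
have hdot : forall i j, i != j -> dotv (r i) (r j) = -1.
  move=> i1 i2; case: (hsplit i1) => [->|[j1 ->]]; case: (hsplit i2) => [->|[j2 ->]].
  - by rewrite eqxx.
  - by move=> _; rewrite hrmax dotvN dotv_suml hsumG.
  - by move=> _; rewrite dotvC hrmax dotvN dotv_suml hsumG.
  - move=> hne; rewrite hG.
    have -> : (j1 == j2) = false.
      by apply/negbTE; apply: contra hne => /eqP ->.
    by rewrite mulr0n sub0r.
rewrite !hr !dotvZ dotvC dotvZ dotvC hdot //.
field.
by apply/andP; split.
Qed.
Arguments Ta {R d n} a phi.
Arguments Tm {R d n} T v.
Arguments sym_uniq {R d n} T1 T2.
Arguments Ta_sym {R d n}.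
Arguments Ta_diag {R d n}.
Arguments bil {R d} Q u w.
Arguments Cm_ext {R d Q m}.
Arguments Cm_scale {R d Q m}.
Arguments Cm_sum {R d Q m I}.
Arguments Cm_prod {R d Q m}.



Lemma sum_tuple_ffun (R : realType) d n (F : n.-tuple 'I_d -> R) :
  \sum_(j : n.-tuple 'I_d) F j = \sum_(phi : {ffun 'I_n -> 'I_d}) F [tuple phi i | i < n].
Proof.
apply: reindex; apply: onW_bij.
exists (fun j : n.-tuple 'I_d => [ffun i => tnth j i]).
  by move=> phi; apply/ffunP => i; rewrite ffunE tnth_mktuple.
by move=> j; apply: eq_from_tnth => i; rewrite tnth_mktuple ffunE.
Qed.

Lemma pair_prod (R : realType) (g : nat -> R) m :
  \prod_(0 <= r < m) (g (2 * r)%N * g (2 * r).+1) = \prod_(0 <= t < 2 * m) g t.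
Proof.
elim: m => [|m IH]; first by rewrite !big_geq.
rewrite big_nat_recr //= IH.
have -> : (2 * m.+1 = (2 * m).+2)%N by lia.
by rewrite big_nat_recr //= big_nat_recr //= mulrA.
Qed.

Lemma sum_perm0 (R : realType) n (g : 'I_n.+1 -> R) :
  \sum_(i < n.+1) g i = 0 -> \sum_(sg : 'S_n.+1) g (sg ord0) = 0.
Proof.
move=> H.
have E : forall t : 'I_n.+1, \sum_(sg : 'S_n.+1) g (sg t) = \sum_(sg : 'S_n.+1) g (sg ord0).
  move=> t.
  have hinj : injective (fun sg : 'S_n.+1 => (tperm ord0 t * sg)%g) by apply: mulgI.
  rewrite [RHS](reindex_inj hinj) /=; apply: eq_bigr => sg _.
  by rewrite permM tpermL.
have : (n.+1)%:R * \sum_(sg : 'S_n.+1) g (sg ord0) = 0.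
  rewrite -[in X in X * _](card_ord n.+1) -sumr_const mulr_suml.
  transitivity (\sum_(t < n.+1) \sum_(sg : 'S_n.+1) g (sg t)).
    by apply: eq_bigr => t _; rewrite mul1r E.
  rewrite exchange_big /= big1 // => sg _.
  by move: H; rewrite (reindex_inj (@perm_inj _ sg)).
by move/eqP; rewrite mulf_eq0 pnatr_eq0 /= => /eqP.
Qed.

Theorem proposition3 (R : realType) (d q : nat)
  (f : 'rV[R]_d -> R) (th : 'rV[R]_d)
  (a : 'I_q.+1 -> 'rV[R]_d) (s : 'I_q.+1 -> R) :
  ~~ odd q -> (2 <= q)%N -> (q <= d)%N ->
  (forall x, 0 <= f x) ->
  (forall x, f x <= f th) ->
  smooth_upto (q.+1) f ->
  (forall s1 s2 : seq 'I_d, size s1 = q.+1 -> perm_eq s1 s2 ->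
     iter_partial s1 f th = iter_partial s2 f th) ->
  hessian f th \in unitmx ->
  (forall x, taylor_term (q.+1) f th (x - th)
             = \prod_(i < q.+1) dotv (a i) (x - th)) ->
  \rank (\matrix_(i < q.+1) a i) = q ->
  \sum_(i < q.+1) s i *: a i = 0 ->
  \prod_(i < q.+1) s i != 0 ->
  exists P : 'M[R]_d,
    [/\ P \in unitmx, `|\det P| = 1 &
        bias_vec q (invmx P *m (invmx P)^T) f th = 0].
Proof.
move=> hodd hq2 hqd hf0 hfmax hsm hsym hhess htay hrank hsum hprod.
have hs : forall i, s i != 0.
  move=> i; apply/negP => /eqP H; move/eqP: hprod; apply.
  by rewrite (bigD1 i) //= H mul0r.
have [P [lam [hPu hPdet hlam hgram]]] := @exists_P R d q a s (ltnW hq2) hqd hrank hsum hs.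
exists P; split => //.
set Q := invmx P *m (invmx P)^T.
have hm : (2 * (q %/ 2) = q)%N.
  have := odd_double_half q; rewrite (negbTE hodd) add0n -muln2 -divn2 => {2}<-.
  by rewrite mulnC.
set m := (q %/ 2)%N in hm *.
pose Tf (phi : {ffun 'I_q.+1 -> 'I_d}) := iter_partial [tuple phi i | i < q.+1] f th.
have Tsym : forall phi, Tf phi = Ta a phi.
  apply: sym_uniq.
  - move=> phi sg; apply: hsym; first by rewrite size_tuple.
    apply/tuple_permP; exists sg.
    by congr tval; apply: eq_mktuple => i; rewrite ffunE tnth_mktuple.
  - by move=> phi sg; apply: Ta_sym.
  - move=> h; rewrite Ta_diag /Tm.
    have := htay (h + th); rewrite addrK /taylor_term sum_tuple_ffun => E.
    rewrite -E mulrA mulfV ?mul1r; last by rewrite pnatr_eq0 -lt0n fact_gt0.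
    apply: eq_bigr => phi _; congr (_ * _); apply: eq_bigr => i _.
    by rewrite tnth_mktuple.
apply/rowP => k; rewrite !mxE.
rewrite (@bias_Cm R d q Q f hsm k) /=.
rewrite -/m.
rewrite (Cm_ext _ (fun s0 => \sum_(sg : 'S_q.+1) a (sg ord0) 0 k *
           \prod_(0 <= r < 2 * m) a (sg (inord r.+1)) 0 (nth k s0 r))); last first.
  move=> s0 Hs0.
  rewrite /=; change (iter_partial (k :: s0) f th = \sum_(sg : 'S_q.+1) a (sg ord0) 0 k * \prod_(0 <= r < 2 * m) a (sg (inord r.+1)) 0 (nth k s0 r)).
  have Hsz : size (k :: s0) == q.+1 by rewrite /= Hs0 hm.
  have E : [tuple [ffun i => tnth (Tuple Hsz) i] i | i < q.+1] = Tuple Hsz.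
    by apply: eq_from_tnth => i; rewrite tnth_mktuple ffunE.
  have -> : k :: s0 = [tuple [ffun i => tnth (Tuple Hsz) i] i | i < q.+1] :> seq _ by rewrite E.
  have := Tsym [ffun i => tnth (Tuple Hsz) i]; rewrite /Tf => ->.
  rewrite /Ta; apply: eq_bigr => sg _; rewrite big_ord_recl ffunE (tnth_nth k) /=.
  congr (_ * _).
  rewrite hm big_mkord; apply: eq_bigr => i _; rewrite ffunE (tnth_nth k) /=.
  congr (a (sg _) 0 _); apply: val_inj; by rewrite /= inordK // ltnS ltn_ord.
rewrite Cm_sum.
set S := \prod_(i < q.+1) s i.
transitivity (\sum_(sg : 'S_q.+1) ((-lam)^+m / S) * (s (sg ord0) * a (sg ord0) 0 k)); last first.
  rewrite -mulr_sumr (@sum_perm0 R q (fun i => s i * a i 0 k)) ?mulr0 //.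
  transitivity ((\sum_(i < q.+1) s i *: a i) 0 k); last by rewrite hsum mxE.
  by rewrite summxE; apply: eq_bigr => i _; rewrite mxE.
apply: eq_bigr => sg _.
rewrite (Cm_scale (fun s0 => \prod_(0 <= r < 2 * m) a (sg (inord r.+1)) 0 (nth k s0 r))).
rewrite (Cm_prod (fun r => a (sg (inord r.+1)))).
set U := \prod_(0 <= t < 2 * m) s (sg (inord t.+1)).
have hSU : S = s (sg ord0) * U.
  rewrite /S (reindex_inj (@perm_inj _ sg)) /= big_ord_recl /U hm big_mkord.
  congr (_ * _); apply: eq_bigr => i _; congr (s (sg _)).
  by apply: val_inj; rewrite /= inordK // ltnS ltn_ord.
have hB : \prod_(0 <= r < m) bil Q (a (sg (inord (2 * r).+1))) (a (sg (inord (2 * r).+2))) * U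
          = (-lam)^+m.
  rewrite /U -(@pair_prod R (fun t => s (sg (inord t.+1)))) -big_split /=.
  rewrite -[in RHS](subn0 m) -prodr_const_nat.
  apply: eq_big_nat => r /andP [_ hr].
  rewrite hgram; last first.
    rewrite (inj_eq perm_inj); apply/eqP => /(congr1 val) /=.
    rewrite !inordK; lia.
  by field; apply/andP; split; apply: hs.
have hU : U != 0.
  by apply/eqP => H; move: hprod; rewrite -/S hSU H mulr0 eqxx.
rewrite hSU -hB.
field.
by apply/andP; split.
Qed.
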